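(* Let $\mathcal A$ be a commutative semiring, $n\ge2$, $V_n$ the free $\mathcal A$-module with basis $b_0,\dots,b_{n-1}$, $f\in\operatorname{End}_{\mathcal A}(V_n)$, $D(z)$ the Hasse–Schmidt derivation on $\bigwedge V_n$ associated with $f$ and $\overline D(z)$ its quasi-inverse on $\bigwedge^2V_n$. Then for all $u,v\in V_n$: $$D(z)\,\overline D(z)(u\wedge v)\succeq u\wedge v\qquad\text{and}\qquad \overline D(z)\,D(z)(u\wedge v)\succeq u\wedge v .$$
   Context: $\bigwedge V_n=\bigoplus_{r\ge0}\bigwedge^rV_n$ is the graded associative $\mathcal A$-semialgebra with product $\wedge$ such that $\bigwedge^0V_n=\mathcal A$, $\bigwedge^1V_n=V_n$, and for $r\ge2$, $\bigwedge^rV_n$ is the free $\mathcal A$-module with basis $\{b_I,b_I':|I|=r\}$, $b_I=b_{i_1}\wedge\cdots\wedge b_{i_r}$ for $I=\{i_1<\dots<i_r\}\subseteq\{0,\dots,n-1\}$. For $r\ge2$ the negation map $(-)$ is the $\mathcal A$-linear involution of $\bigwedge^rV_n$ exchanging $b_I,b_I'$, compatible with $\wedge$; $b_i\wedge b_i=\mathbb 0$ and $u\wedge w=(-)(w\wedge u)$ for $u,w\in V_n$. A quasi-zero is an element $x+(-)x$; $x\succeq y$ means $x=y+d$ with $d$ in the ideal generated by quasi-zeros and all $w\wedge w$ ($w\in V_n$), coefficientwise for power series in $z$. $D(z)=\sum_iD_iz^i$, $D_i\in\operatorname{End}_{\mathcal A}(\bigwedge V_n)$ degree-preserving, $D(z)(x\wedge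 y)=D(z)x\wedge D(z)y$, $D_iv=f^i(v)$ for $v\in V_n$ (so $D_1=f$ on $V_n$). On $\bigwedge^2V_n$, $\overline D(z)(x\wedge y)=x\wedge y+(f(y)\wedge x+y\wedge f(x))z+(f(x)\wedge f(y))z^2$ for $x,y\in V_n$, extended additively and coefficientwise to power series in $z$. *)

(* Defs.v *)
From HB Require Import structures.
From mathcomp Require Import all_boot all_order all_algebra.
Set Implicit Arguments. Unset Strict Implicit. Unset Printing Implicit Defensive.
Import GRing.Theory.
Local Open Scope ring_scope.

(* V_n : free A-module with basis b_0..b_{n-1}; v i = coefficient of b_i.    *)
Definition Vn (A : comPzSemiRingType) (n : nat) := {ffun 'I_n -> A}.

Definition vscale (A : comPzSemiRingType) n (a : A) (v : Vn A n) : Vn A n :=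
  [ffun i => a * v i].

Definition is_endo (A : comPzSemiRingType) n (f : Vn A n -> Vn A n) : Prop :=
  (forall v w : Vn A n, f (v + w) = f v + f w) /\
  (forall (a : A) (v : Vn A n), f (vscale a v) = vscale a (f v)).

Definition pairs2 (n : nat) := {p : 'I_n * 'I_n | (p.1 < p.2)%N}.

(* /\^2 V_n : free A-module with basis {b_I, b'_I : |I| = 2};
   x (I, false) = coefficient of b_I,  x (I, true) = coefficient of b'_I.   *)
Definition W2 (A : comPzSemiRingType) (n : nat) := {ffun (pairs2 n * bool) -> A}.

Definition wneg (A : comPzSemiRingType) n (x : W2 A n) : W2 A n :=
  [ffun k => x (k.1, ~~ k.2)].

Definition wscale (A : comPzSemiRingType) n (a : A) (x : W2 A n) : W2 A n :=
  [ffun k => a * x k].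

(* the wedge product V_n x V_n -> /\^2 V_n: u /\ v = sum_{i,j} u_i v_j b_i/\b_j
   with b_i/\b_i = 0, b_i/\b_j = b_I and b_j/\b_i = (-)b_I = b'_I for i<j.  *)
Definition wedge (A : comPzSemiRingType) n (u v : Vn A n) : W2 A n :=
  [ffun k => let i := (val k.1).1 in let j := (val k.1).2 in
             if k.2 then u j * v i else u i * v j].

(* degree-2 part of the ideal generated by the quasi-zeros x + (-)x and the
   squares w /\ w (w in V_n): A-linear combinations of such elements.        *)
Inductive qz_ideal2 (A : comPzSemiRingType) n : W2 A n -> Prop :=
| qzi0 : qz_ideal2 0
| qzi_qz : forall (a : A) (x : W2 A n), qz_ideal2 (wscale a (x + wneg x))
| qzi_sq : forall (a : A) (w : Vn A n), qz_ideal2 (wscale a (wedge w w))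
| qzi_add : forall d1 d2, qz_ideal2 d1 -> qz_ideal2 d2 -> qz_ideal2 (d1 + d2).

Definition wsucceq (A : comPzSemiRingType) n (x y : W2 A n) : Prop :=
  exists d, qz_ideal2 d /\ x = y + d.

(* power series in z with coefficients in /\^2 V_n: coefficient functions;
   >= is taken coefficientwise *)
Definition ser_succeq (A : comPzSemiRingType) n (X Y : nat -> W2 A n) : Prop :=
  forall k, wsucceq (X k) (Y k).

Definition ser_const (A : comPzSemiRingType) n (x : W2 A n) : nat -> W2 A n :=
  fun k => if k == 0%N then x else 0.

Section HS.
Variables (A : comPzSemiRingType) (n : nat) (f : Vn A n -> Vn A n).

(* D_i v = f^i v on V_n *)
Definition fpow (i : nat) (v : Vn A n) : Vn A n := iter i f v.

(* coefficient of z^k in D(z)(x /\ y) = D(z)x /\ D(z)y, x y in V_n *)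
Definition Dwedge (x y : Vn A n) (k : nat) : W2 A n :=
  \sum_(p < k.+1) wedge (fpow p x) (fpow (k - p) y).

(* the decomposable terms of the coefficient of z^j of Dbar(z)(x /\ y):
   Dbar(z)(x/\y) = x/\y + (f(y)/\x + y/\f(x)) z + (f(x)/\f(y)) z^2          *)
Definition Dbar_terms (x y : Vn A n) (j : nat) : seq (Vn A n * Vn A n) :=
  match j with
  | 0 => [:: (x, y)]
  | 1 => [:: (f y, x); (y, f x)]
  | 2 => [:: (f x, f y)]
  | _ => [::]
  end.

Definition Dbarwedge (x y : Vn A n) (j : nat) : W2 A n :=
  \sum_(t <- Dbar_terms x y j) wedge t.1 t.2.

(* coefficient of z^k of D(z) Dbar(z) (u /\ v): D(z) applied additively to
   the decomposable terms of Dbar(z)(u /\ v), coefficientwise in z *)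
Definition D_Dbar (u v : Vn A n) (k : nat) : W2 A n :=
  \sum_(j < k.+1) \sum_(t <- Dbar_terms u v j) Dwedge t.1 t.2 (k - j).

(* coefficient of z^k of Dbar(z) D(z) (u /\ v): Dbar(z) applied additively to
   the decomposable terms f^p u /\ f^q v of D(z)(u /\ v) *)
Definition Dbar_D (u v : Vn A n) (k : nat) : W2 A n :=
  \sum_(j < k.+1) \sum_(p < j.+1)
     Dbarwedge (fpow p u) (fpow (j - p) v) (k - j).

End HS.

(* Main.v *)
Require Import Defs.
From mathcomp Require Import all_boot all_order all_algebra.
From mathcomp Require Import ring zify.
Import GRing.Theory.
Local Open Scope ring_scope.

Section Aux.
Variables (A : comPzSemiRingType) (n : nat) (f : Vn A n -> Vn A n).

Lemma wnegD (x y : W2 A n) : wneg (x + y) = wneg x + wneg y.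
Proof. by apply/ffunP => k; rewrite !ffunE. Qed.

Lemma wneg0 : wneg (0 : W2 A n) = 0.
Proof. by apply/ffunP => k; rewrite !ffunE. Qed.

Lemma wneg_sum I (r : seq I) (F : I -> W2 A n) :
  wneg (\sum_(i <- r) F i) = \sum_(i <- r) wneg (F i).
Proof. exact: (big_morph _ wnegD wneg0). Qed.

Lemma wneg_wedge (x y : Vn A n) : wneg (wedge x y) = wedge y x.
Proof.
apply/ffunP => [[k b]]; rewrite !ffunE /=; case: b => /=; by rewrite mulrC.
Qed.

Lemma qz_sym (X : W2 A n) : qz_ideal2 (X + wneg X).
Proof.
have -> : X + wneg X = wscale 1 (X + wneg X).
  by apply/ffunP => k; rewrite [RHS]ffunE mul1r.
exact: qzi_qz.
Qed.

Lemma fpow_f m (x : Vn A n) : fpow f m (f x) = f (fpow f m x).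
Proof. by rewrite /fpow -iterSr. Qed.

Lemma fpowS m (x : Vn A n) : fpow f m.+1 x = f (fpow f m x).
Proof. by []. Qed.

Lemma S_recl x y m :
  Dwedge f x y m.+1 = wedge x (f (fpow f m y)) + Dwedge f (f x) y m.
Proof.
rewrite /Dwedge big_ord_recl /=; congr (_ + _).
apply: eq_bigr => i _; rewrite ?lift0 ?subSS fpow_f add0n. by [].
Qed.

Lemma S_recr x y m :
  Dwedge f x y m.+1 = Dwedge f x (f y) m + wedge (f (fpow f m x)) y.
Proof.
rewrite /Dwedge big_ord_recr /= subnn; congr (_ + _).
apply: eq_bigr => i _ /=; rewrite subSn ?fpow_f //; by have := ltn_ord i.
Qed.

Lemma S_swap x y m : Dwedge f y x m = wneg (Dwedge f x y m).
Proof.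
rewrite /Dwedge wneg_sum (reindex_inj rev_ord_inj) /=.
apply: eq_bigr => i _; rewrite wneg_wedge /= subSS subKn //.
by have := ltn_ord i.
Qed.

Definition E (u v : Vn A n) K :=
  Dwedge f u v K.+2 + (wneg (Dwedge f u (f v) K.+1) + wneg (Dwedge f (f u) v K.+1))
  + Dwedge f (f u) (f v) K.

Lemma E_qz u v K : qz_ideal2 (E u v K).
Proof.
rewrite /E S_recl (S_recl u (f v)) S_recr !wnegD.
set a := wedge _ _; set T := Dwedge _ _ _ _; set b := wedge _ _.
have -> : wedge u (f (fpow f K (f v))) = a by rewrite /a fpow_f.
have -> : a + (T + b) + (wneg a + wneg T + (wneg T + wneg b)) + T
   = (a + b + T + T) + wneg (a + b + T + T).
  by rewrite !wnegD; apply/ffunP => k; rewrite !ffunE; ring.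
exact: qz_sym.
Qed.

Lemma E1_qz u v :
  qz_ideal2 (Dwedge f u v 1 + (wneg (Dwedge f u (f v) 0) + wneg (Dwedge f (f u) v 0))).
Proof.
rewrite S_recl /Dwedge !big_ord1 /= ?subn0.
rewrite -wnegD; exact: qz_sym.
Qed.

Lemma Dbar_terms_nil x y t : (3 <= t)%N -> Dbar_terms f x y t = [::].
Proof. by case: t => [|[|[|t]]]. Qed.

Lemma inner0 x y j :
  \sum_(p < j.+1) Dbarwedge f (fpow f p x) (fpow f (j - p) y) 0 = Dwedge f x y j.
Proof.
by apply: eq_bigr => p _; rewrite /Dbarwedge big_cons big_nil addr0.
Qed.

Lemma inner2 x y j :
  \sum_(p < j.+1) Dbarwedge f (fpow f p x) (fpow f (j - p) y) 2
  = Dwedge f (f x) (f y) j.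
Proof.
by apply: eq_bigr => p _; rewrite /Dbarwedge big_cons big_nil addr0 /= !fpow_f.
Qed.

Lemma inner1 x y j :
  \sum_(p < j.+1) Dbarwedge f (fpow f p x) (fpow f (j - p) y) 1
  = wneg (Dwedge f x (f y) j) + wneg (Dwedge f (f x) y j).
Proof.
rewrite /Dwedge !wneg_sum -big_split /=.
apply: eq_bigr => p _; rewrite /Dbarwedge !big_cons big_nil addr0 /=.
by rewrite !wneg_wedge !fpow_f.
Qed.

Lemma sum_first3 (V : nmodType) (G : nat -> V) K :
  \sum_(j < K.+3) G j = G 0%N + G 1%N + G 2%N + \sum_(j < K) G j.+3.
Proof. by rewrite !big_ord_recl ?addrA. Qed.
Lemma sum_last3 (V : nmodType) (G : nat -> V) K :
  \sum_(j < K.+3) G j = \sum_(j < K) G j + G K + G K.+1 + G K.+2.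
Proof. by rewrite !big_ord_recr ?addrA. Qed.

Lemma D_Dbar_E u v K : D_Dbar f u v K.+2 = E u v K.
Proof.
rewrite /D_Dbar /E (@sum_first3 _ (fun j => \sum_(t <- Dbar_terms f u v j)
   Dwedge f t.1 t.2 (K.+2 - j))) /=.
rewrite [X in _ + X]big1 => [|j _]; last by rewrite big_nil.
rewrite !big_cons !big_nil !addr0 ?subSS ?subn0.
by rewrite /= (S_swap u (f v)) (S_swap (f u) v).
Qed.

Lemma D_Dbar1 u v : D_Dbar f u v 1 =
  Dwedge f u v 1 + (wneg (Dwedge f u (f v) 0) + wneg (Dwedge f (f u) v 0)).
Proof.
rewrite /D_Dbar !big_ord_recl big_ord0 /= !big_cons !big_nil !addr0 /=.
rewrite /= (S_swap u (f v)) (S_swap (f u) v).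
by [].
Qed.

Lemma Dbar_D_E u v K : Dbar_D f u v K.+2 = E u v K.
Proof.
rewrite /Dbar_D /E (@sum_last3 _ (fun j => \sum_(p < j.+1)
     Dbarwedge f (fpow f p u) (fpow f (j - p) v) (K.+2 - j))) /=.
rewrite big1 => [|i _]; last first.
  apply: big1 => p _; rewrite /Dbarwedge Dbar_terms_nil ?big_nil //.
  by have := ltn_ord i; lia.
rewrite add0r subnn inner0.
have -> : (K.+2 - K.+1 = 1)%N by lia.
have -> : (K.+2 - K = 2)%N by lia.
rewrite inner1 inner2.
by apply/ffunP => k; rewrite !ffunE; ring.
Qed.

Lemma Dbar_D1 u v : Dbar_D f u v 1 =
  Dwedge f u v 1 + (wneg (Dwedge f u (f v) 0) + wneg (Dwedge f (f u) v 0)).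
Proof.
rewrite /Dbar_D big_ord_recr big_ord1 /= ?subnn ?subn0 inner0 inner1.
by rewrite addrC.
Qed.

Lemma D_Dbar0 u v : D_Dbar f u v 0 = wedge u v.
Proof.
by rewrite /D_Dbar big_ord1 /= big_cons big_nil addr0 /Dwedge big_ord1.
Qed.

Lemma Dbar_D0 u v : Dbar_D f u v 0 = wedge u v.
Proof.
by rewrite /Dbar_D big_ord1 /= big_ord1 /Dbarwedge big_cons big_nil addr0.
Qed.

End Aux.

Theorem proposition3p4 (A : comPzSemiRingType) (n : nat) (hn : (2 <= n)%N)
  (f : Vn A n -> Vn A n) (hf : is_endo f) (u v : Vn A n) :
  ser_succeq (D_Dbar f u v) (ser_const (wedge u v)) /\
  ser_succeq (Dbar_D f u v) (ser_const (wedge u v)).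
Proof.
split => -[|[|K]]; rewrite /ser_const /=.
- by exists 0; split; [exact: qzi0 | rewrite D_Dbar0 addr0].
- by exists (D_Dbar f u v 1); split; [rewrite D_Dbar1; exact: E1_qz | rewrite add0r].
- by exists (D_Dbar f u v K.+2); split; [rewrite D_Dbar_E; exact: E_qz | rewrite add0r].
- by exists 0; split; [exact: qzi0 | rewrite Dbar_D0 addr0].
- by exists (Dbar_D f u v 1); split; [rewrite Dbar_D1; exact: E1_qz | rewrite add0r].
- by exists (Dbar_D f u v K.+2); split; [rewrite Dbar_D_E; exact: E_qz | rewrite add0r].
Qed.
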